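(* For all integers $n\ge 0$, $$\left\lfloor \frac{\varphi+2}{5}\,n\right\rfloor \le a(n)\le \lfloor \varphi n\rfloor .$$
   Context: $\varphi=(1+\sqrt5)/2$. Let $(F_n)_{n\ge 0}$ be the Fibonacci numbers: $F_0=0$, $F_1=1$, $F_n=F_{n-1}+F_{n-2}$ for $n\ge 2$. Define $(a(n))_{n\ge 0}$ (OEIS A105774) by $a(0)=0$, $a(1)=1$, and for $n\ge 2$, $a(n)=F_{j+1}-a(n-F_j)$, where $j\ge 2$ is the unique index with $F_j<n\le F_{j+1}$. *)

(* Defs.v *)
From Stdlib Require Import Reals ZArith Arith Lia.
Open Scope R_scope.

Fixpoint fib (n : nat) : nat :=
  match n with
  | O => 0
  | S m => match m with
           | O => 1
           | S k => fib m + fib k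
           end
  end%nat.

Fixpoint fib_index_from (fuel start n : nat) : nat :=
  match fuel with
  | O => start
  | S f => if Nat.leb n (fib (S start)) then start
           else fib_index_from f (S start) n
  end.

(* For n >= 2: the unique j >= 2 with F_j < n <= F_(j+1)
   (= the least j >= 2 with n <= F_(j+1); fuel n suffices since F_(n+1) >= n). *)
Definition fib_index (n : nat) : nat := fib_index_from n 2 n.

(* a(n) (OEIS A105774), computed with fuel (each recursive call strictly
   decreases the argument, since F_j >= 1, so fuel n is enough).
   Values are in Z so that the subtraction is the true integer subtraction. *)
Fixpoint a_aux (fuel n : nat) : Z :=
  match fuel with
  | O => 0%Z
  | S f =>
    match n with
    | O => 0%Z
    | S O => 1%Z
    | _ => let j := fib_index n in
           (Z.of_nat (fib (S j)) - a_aux f (n - fib j))%Z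
    end
  end.

Definition a (n : nat) : Z := a_aux n n.

Definition phi : R := (1 + sqrt 5) / 2.

(* floor x : Int_part x = up x - 1 is the floor of x in Stdlib. *)
Definition floorR (x : R) : Z := Int_part x.

(* Main.v *)
Require Import Defs.
From Stdlib Require Import Reals ZArith Lia Lra Psatz List.
Open Scope R_scope.

Lemma fib_SS n : fib (S (S n)) = (fib (S n) + fib n)%nat.
Proof. reflexivity. Qed.

Lemma fib_pos_lin n : (1 <= fib (S n) /\ n <= fib (S n))%nat.
Proof.
  induction n as [n IH] using lt_wf_ind.
  destruct n as [|[|n]].
  - simpl; lia.
  - simpl; lia.
  - rewrite fib_SS. assert (H1 := IH (S n) ltac:(lia)). assert (H2 := IH n ltac:(lia)). lia.
Qed.

Lemma fib_mono1 n : (fib n <= fib (S n))%nat.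
Proof. destruct n; [simpl; lia|]. rewrite fib_SS. lia. Qed.

Lemma fib_le m n : (m <= n)%nat -> (fib m <= fib n)%nat.
Proof. induction 1; [lia|]. pose proof (fib_mono1 m0). lia. Qed.

Lemma fif_spec : forall fuel start n j, (start <= j)%nat ->
  (forall i, (start <= i < j)%nat -> (fib (S i) < n)%nat) ->
  (n <= fib (S j))%nat -> (j - start <= fuel)%nat ->
  fib_index_from fuel start n = j.
Proof.
  induction fuel; intros start n j H1 H2 H3 H4.
  - simpl; lia.
  - change (fib_index_from (S fuel) start n) with (if Nat.leb n (fib (S start)) then start else fib_index_from fuel (S start) n).
    destruct (Nat.leb n (fib (S start))) eqn:E.
    + apply Nat.leb_le in E. destruct (Nat.eq_dec start j); auto.
      assert (Hs : (start <= start < j)%nat) by lia. specialize (H2 start Hs). lia.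
    + apply Nat.leb_gt in E. assert (start <> j) by (intro; subst; lia).
      apply IHfuel; try lia.
      intros i Hi. apply H2. lia.
Qed.

Lemma fif_ge : forall fuel start n, (start <= fib_index_from fuel start n)%nat.
Proof.
  induction fuel; intros; [simpl; lia|].
  change (fib_index_from (S fuel) start n) with (if Nat.leb n (fib (S start)) then start else fib_index_from fuel (S start) n).
  destruct (Nat.leb n (fib (S start))); [lia|]. specialize (IHfuel (S start) n). lia.
Qed.

Lemma a_aux_stable : forall f g n, (n <= f)%nat -> (n <= g)%nat -> a_aux f n = a_aux g n.
Proof.
  induction f; intros g n Hf Hg.
  - assert (n = 0%nat) by lia. subst. destruct g; reflexivity.
  - destruct g. { assert (n=0%nat) by lia; subst; reflexivity. }
    destruct n as [|[|n]]; try reflexivity.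
    cbn [a_aux].
    assert (Hj := fif_ge (S (S n)) 2 (S (S n))).
    unfold fib_index.
    destruct (fib_index_from (S (S n)) 2 (S (S n))) as [|j] eqn:E; [lia|].
    destruct (fib_pos_lin j).
    f_equal. apply IHf; lia.
Qed.

Lemma a_aux_SS f n : a_aux (S f) (S (S n)) =
  (Z.of_nat (fib (S (fib_index (S (S n))))) - a_aux f (S (S n) - fib (fib_index (S (S n)))))%Z.
Proof. reflexivity. Qed.

Lemma a_block p m : (fib (S (S p)) < m <= fib (S (S (S p))))%nat ->
  a m = (Z.of_nat (fib (S (S (S p)))) - a (m - fib (S (S p))))%Z.
Proof.
  intros Hm. destruct (fib_pos_lin (S p)) as [H1 H2].
  destruct m as [|[|m]]; try lia.
  unfold a at 1. rewrite a_aux_SS.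
  assert (E : fib_index (S (S m)) = S (S p)).
  { unfold fib_index. apply fif_spec; try lia.
    intros i Hi. pose proof (fib_le (S i) (S (S p)) ltac:(lia)). lia. }
  rewrite E. f_equal. unfold a. apply a_aux_stable; lia.
Qed.

Lemma block_ex n : (2 <= n)%nat -> exists p, (fib (S (S p)) < n <= fib (S (S (S p))))%nat.
Proof.
  induction n; intros H; [lia|].
  destruct (Nat.eq_dec n 1). { subst. exists 0%nat. simpl. lia. }
  destruct IHn as [p Hp]; [lia|].
  destruct (le_lt_dec (S n) (fib (S (S (S p))))).
  - exists p; lia.
  - exists (S p). rewrite (fib_SS (S (S p))). destruct (fib_pos_lin (S p)). lia.
Qed.

Lemma s2 : sqrt 5 * sqrt 5 = 5.
Proof. apply sqrt_sqrt; lra. Qed.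
Lemma s_pos : 0 < sqrt 5.
Proof. apply sqrt_lt_R0; lra. Qed.
Lemma s_bnd : 2.236 < sqrt 5 < 2.2361.
Proof. pose proof s2; pose proof s_pos; split; nra. Qed.

Definition c := (phi + 2) / 5.
Definition psi := (1 - sqrt 5) / 2.
Definition rr := 5/8.

Lemma c_eq : c = (5 + sqrt 5) / 10.
Proof. unfold c, phi. field. Qed.

Definition ee (i : nat) := c * (INR (fib (S (S i))) + INR (fib i)) - INR (fib (S (S i))).

Lemma ee_lin i : ee (S (S i)) = ee (S i) + ee i.
Proof.
  unfold ee. rewrite (fib_SS (S (S i))), (fib_SS (S i)), (fib_SS i).
  rewrite !plus_INR. ring.
Qed.

Lemma psi2 : psi * psi = psi + 1.
Proof. unfold psi. pose proof s2. nra. Qed.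

Lemma ee_rec i : ee (S i) = psi * ee i.
Proof.
  induction i.
  - unfold ee. simpl fib. simpl INR. rewrite c_eq. unfold psi. pose proof s2. nra.
  - rewrite ee_lin, IHi. replace (psi * (psi * ee i)) with ((psi*psi) * ee i) by ring.
    rewrite psi2. ring.
Qed.

Lemma ee_bnd i : - (1/2 * rr ^ (S i)) <= ee i <= 1/2 * rr ^ (S i).
Proof.
  induction i.
  - unfold ee. simpl fib. simpl INR. rewrite c_eq. pose proof s_bnd. unfold rr. simpl. lra.
  - rewrite ee_rec. pose proof s_bnd.
    assert (Hp : -(5/8) <= psi <= 0) by (unfold psi; lra).
    assert (HB : 0 <= rr ^ S i) by (apply pow_le; unfold rr; lra).
    change (rr ^ S (S i)) with (rr * rr ^ S i). unfold rr in *. nra.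
Qed.

Definition dd (i : nat) := INR (fib (S i)) - phi * INR (fib i).

Lemma dd_bnd i : -1 <= dd i <= 1.
Proof.
  induction i.
  - unfold dd. simpl. lra.
  - assert (E : dd (S i) = psi * dd i).
    { unfold dd. rewrite fib_SS, plus_INR.
      assert (Hpsi : psi = 1 - phi) by (unfold psi, phi; field).
      assert (Hphi : phi * phi = phi + 1) by (unfold phi; pose proof s2; nra).
      rewrite Hpsi.
      replace ((1 - phi) * (INR (fib (S i)) - phi * INR (fib i))) with
        (INR (fib (S i)) - phi * INR (fib i) - phi * INR (fib (S i)) + (phi*phi) * INR (fib i)) by ring.
      rewrite Hphi. ring. }
    rewrite E. pose proof s_bnd.
    assert (Hp : -1 <= psi <= 0) by (unfold psi; lra). nra.
Qed.

Definition LB (k : nat) (l : R) := forall m, (1 <= m <= fib k)%nat -> - l <= IZR (a m) - c * INR m.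
Definition UB (k : nat) (u : R) := forall m, (1 <= m <= fib (S k))%nat ->
  IZR (a m) + c * INR m <= INR (fib (S k)) + c * INR (fib k) + u.

Lemma c_pos : 1/2 < c.
Proof. rewrite c_eq. pose proof s_bnd. lra. Qed.

Lemma block_real p m : (fib (S (S p)) < m <= fib (S (S (S p))))%nat ->
  let m' := (m - fib (S (S p)))%nat in
  (1 <= m' <= fib (S p))%nat /\
  IZR (a m) = INR (fib (S (S p))) + INR (fib (S p)) - IZR (a m') /\
  INR m = INR (fib (S (S p))) + INR m'.
Proof.
  intros Hm m'. pose proof (fib_SS (S p)).
  split; [unfold m'; lia|]. split.
  - rewrite (a_block p m Hm). rewrite minus_IZR, <- INR_IZR_INZ, H, plus_INR. reflexivity.
  - rewrite <- plus_INR. f_equal. unfold m'. lia.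
Qed.

Lemma S1 p l1 u l2 : LB (S (S p)) l1 -> UB p u -> l1 <= l2 -> ee p + u <= l2 ->
  LB (S (S (S p))) l2.
Proof.
  intros H1 H2 Hl He m Hm.
  destruct (le_lt_dec m (fib (S (S p)))) as [Hle|Hlt].
  - specialize (H1 m ltac:(lia)). lra.
  - destruct (block_real p m ltac:(lia)) as (Hm' & Ea & Em).
    set (m' := (m - fib (S (S p)))%nat) in *.
    specialize (H2 m' Hm'). unfold ee in He.
    rewrite Ea, Em. rewrite (fib_SS p), plus_INR in *. nra.
Qed.

Lemma S2 p u1 l u2 : UB (S p) u1 -> LB (S p) l -> u1 <= u2 -> l <= u2 -> UB (S (S p)) u2.
Proof.
  intros H1 H2 Hu Hl m Hm.
  destruct (le_lt_dec m (fib (S (S p)))) as [Hle|Hlt].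
  - specialize (H1 m ltac:(lia)).
    pose proof (fib_mono1 (S p)) as M1. pose proof (fib_mono1 (S (S p))) as M2.
    apply le_INR in M1. apply le_INR in M2. pose proof c_pos. nra.
  - destruct (block_real p m ltac:(lia)) as (Hm' & Ea & Em).
    set (m' := (m - fib (S (S p)))%nat) in *.
    specialize (H2 m' Hm'). rewrite Ea, Em. rewrite (fib_SS (S p)), plus_INR. nra.
Qed.

Definition lam (k : nat) := 1/2 - 1/4 * rr ^ k.
Definition mu (k : nat) := 1/2 - 16/25 * rr ^ k.

Definition St p := LB (S (S p)) (lam (S (S p))) /\ LB (S p) (lam (S p)) /\
  UB (S p) (mu (S (S p))) /\ UB p (mu (S p)).

Lemma St_step p : St p -> St (S p).
Proof.
  intros (H1 & H2 & H3 & H4).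
  assert (HB : 0 <= rr ^ p) by (apply pow_le; unfold rr; lra).
  pose proof (ee_bnd p) as He.
  unfold lam, mu in *. simpl pow in *. unfold rr in *.
  split; [|split; [exact H1|split; [|exact H3]]].
  - apply (S1 p _ _ _ H1 H4); unfold lam, mu; simpl pow; unfold rr; nra.
  - apply (S2 p _ _ _ H3 H2); unfold lam, mu; simpl pow; unfold rr; nra.
Qed.

Definition sle (D W : Z) : bool :=
  if (0 <=? W)%Z then ((D <=? 0)%Z || (5*D*D <=? W*W)%Z) else ((D <? 0)%Z && (W*W <=? 5*D*D)%Z).

Lemma sle_sound D W : sle D W = true -> IZR D * sqrt 5 <= IZR W.
Proof.
  unfold sle. pose proof s2. pose proof s_pos.
  destruct (0 <=? W)%Z eqn:E1.
  - apply Z.leb_le in E1. apply IZR_le in E1. intros H1. apply Bool.orb_true_iff in H1.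
    destruct H1 as [H1|H1].
    + apply Z.leb_le in H1. apply IZR_le in H1. nra.
    + apply Z.leb_le in H1. apply IZR_le in H1. rewrite !mult_IZR in H1.
      destruct (Rle_dec (IZR D) 0); [nra|].
      assert (0 <= IZR D * sqrt 5) by nra.
      assert ((IZR D * sqrt 5) * (IZR D * sqrt 5) <= IZR W * IZR W) by nra. nra.
  - apply Z.leb_gt in E1. apply IZR_lt in E1. intros H1. apply Bool.andb_true_iff in H1.
    destruct H1 as [H1 H2]. apply Z.ltb_lt in H1. apply IZR_lt in H1.
    apply Z.leb_le in H2. apply IZR_le in H2. rewrite !mult_IZR in H2.
    assert (IZR D * sqrt 5 < 0) by nra.
    assert (IZR W * IZR W <= (IZR D * sqrt 5) * (IZR D * sqrt 5)) by nra. nra.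
Qed.

Definition lowchk (m : nat) := sle (10 * Z.of_nat m) (100 * a m - 50 * Z.of_nat m + 49).
Definition upchk (K m : nat) := sle (10 * (Z.of_nat m - Z.of_nat (fib K)))
  (100 * Z.of_nat (fib (S K)) + 50 * Z.of_nat (fib K) + 48 - 100 * a m - 50 * Z.of_nat m).

Lemma chk1 : forallb lowchk (seq 1 55) = true. Proof. vm_compute. reflexivity. Qed.
Lemma chk2 : forallb (upchk 9) (seq 1 55) = true. Proof. vm_compute. reflexivity. Qed.
Lemma chk3 : forallb (upchk 8) (seq 1 34) = true. Proof. vm_compute. reflexivity. Qed.

Lemma lowchk_ok m : lowchk m = true -> -(49/100) <= IZR (a m) - c * INR m.
Proof.
  intros H. apply sle_sound in H. rewrite c_eq, INR_IZR_INZ.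
  repeat rewrite ?mult_IZR, ?plus_IZR, ?minus_IZR in H. nra.
Qed.

Lemma upchk_ok K m : upchk K m = true ->
  IZR (a m) + c * INR m <= INR (fib (S K)) + c * INR (fib K) + 48/100.
Proof.
  intros H. apply sle_sound in H. rewrite c_eq, !INR_IZR_INZ.
  repeat rewrite ?mult_IZR, ?plus_IZR, ?minus_IZR in H. nra.
Qed.

Lemma St8 : St 8.
Proof.
  assert (R9 : rr ^ 9 <= 1/50) by (unfold rr; simpl; lra).
  assert (R10 : rr ^ 10 <= 1/50) by (unfold rr; simpl; lra).
  assert (L : forall k m, (k <= 10)%nat -> (1 <= m <= fib k)%nat -> -(49/100) <= IZR (a m) - c * INR m).
  { intros k m Hk Hm. apply lowchk_ok.
    pose proof (fib_le k 10 Hk). simpl in H.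
    apply (proj1 (forallb_forall _ _) chk1). apply in_seq. lia. }
  unfold St, lam, mu; split; [|split; [|split]].
  - intros m Hm. pose proof (L 10%nat m ltac:(lia) Hm). lra.
  - intros m Hm. pose proof (L 9%nat m ltac:(lia) Hm). lra.
  - intros m Hm. assert (H := upchk_ok 9 m). simpl in Hm.
    assert (upchk 9 m = true). { apply (proj1 (forallb_forall _ _) chk2). apply in_seq. lia. }
    specialize (H H0). lra.
  - intros m Hm. assert (H := upchk_ok 8 m). simpl in Hm.
    assert (upchk 8 m = true). { apply (proj1 (forallb_forall _ _) chk3). apply in_seq. lia. }
    specialize (H H0). lra.
Qed.

Lemma St_all q : St (q + 8).
Proof. induction q; [exact St8|]. apply St_step in IHq. exact IHq. Qed.

Lemma low_all n : (1 <= n)%nat -> -(1/2) <= IZR (a n) - c * INR n.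
Proof.
  intros Hn. destruct (St_all n) as (H1 & _).
  destruct (fib_pos_lin (S (n + 8))).
  assert (HB : 0 <= rr ^ S (S (n + 8))) by (apply pow_le; unfold rr; lra).
  specialize (H1 n ltac:(lia)). unfold lam in H1. lra.
Qed.

Lemma up_all n : IZR (a n) <= phi * INR n.
Proof.
  assert (Hphi : 1 < phi) by (unfold phi; pose proof s_bnd; lra).
  destruct (le_lt_dec 2 n) as [H2|H2].
  - destruct (block_ex n H2) as [p Hp].
    destruct (block_real p n Hp) as (Hm' & Ea & Em).
    set (m' := (n - fib (S (S p)))%nat) in *.
    pose proof (low_all m' ltac:(lia)) as Hl. pose proof c_pos.
    destruct Hm' as [Hm1 _]. apply le_INR in Hm1. simpl in Hm1.
    assert (0 < IZR (a m')) by nra.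
    apply lt_IZR in H0. assert (1 <= IZR (a m')) by (apply IZR_le; lia).
    pose proof (dd_bnd (S (S p))) as Hd. unfold dd in Hd.
    rewrite (fib_SS (S p)), plus_INR in Hd.
    assert (0 <= INR m') by (apply pos_INR). nra.
  - destruct n as [|[|n]]; [| |lia].
    + simpl. unfold a. simpl. lra.
    + unfold a. simpl. lra.
Qed.

Lemma floor_le x z : x < IZR z + 1 -> (Int_part x <= z)%Z.
Proof.
  intros H. destruct (base_Int_part x).
  assert (IZR (Int_part x) < IZR (z + 1)) by (rewrite plus_IZR; lra).
  apply lt_IZR in H2. lia.
Qed.

Lemma le_floor x z : IZR z <= x -> (z <= Int_part x)%Z.
Proof.
  intros H. destruct (base_Int_part x).
  assert (IZR (z - 1) < IZR (Int_part x)) by (rewrite minus_IZR; lra).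
  apply lt_IZR in H2. lia.
Qed.

Theorem proposition6 : forall n : nat,
  (floorR ((phi + 2) / 5 * INR n) <= a n <= floorR (phi * INR n))%Z.
Proof.
  intros n. unfold floorR. split.
  - apply floor_le. fold c. destruct n as [|n].
    + simpl. unfold a. simpl. lra.
    + pose proof (low_all (S n) ltac:(lia)). lra.
  - apply le_floor. apply up_all.
Qed.
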